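(* Let $n\ge 2k\ge 2$ and let $S\subseteq\{0,1,\ldots,k-1\}$ with $|S|=s>1$, and let $X=\bigcup_{i\in S}J(n,k,i)$. If $X$ admits perfect state transfer at time $\tau$, then $n=2k$ and there is a permutation matrix $T$ of order two with no fixed points and a complex number $\lambda$ with $|\lambda|=1$ such that $\mathcal{H}_X(\tau)=\lambda T$.
   Context: $J(n,k,i)$ is the graph on the $k$-subsets of $\{1,\ldots,n\}$ with $A\sim B$ iff $|A\cap B|=i$; the union $\bigcup_{i\in S}J(n,k,i)$ has $A\sim B$ iff $|A\cap B|\in S$. For a simple graph $X$ with adjacency matrix $A$, $\mathcal{H}_X(t)=e^{itA}$. $X$ admits perfect state transfer at time $\tau>0$ if $|\mathcal{H}_X(\tau)_{u,v}|=1$ for some vertices $u\neq v$. *)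

(* Defs.v *)
(* Complex numbers are represented by
   pairs (real part, imaginary part) of Stdlib reals. *)
From Stdlib Require Import Reals Factorial.
From HB Require Import structures.
From mathcomp Require Import all_boot.

Set Implicit Arguments.
Unset Strict Implicit.
Unset Printing Implicit Defensive.

(* Vertices of J(n,k,_): the k-subsets of {0,...,n-1} (0-based copy of {1..n}). *)
Definition vert (n k : nat) := {A : {set 'I_n} | #|A| == k}.

(* Adjacency of X = \bigcup_{i in S} J(n,k,i), with S a subset of {0,...,k-1}:
   A ~ B iff |A cap B| in S. *)
Definition jadj (n k : nat) (S : {set 'I_k}) (A B : vert n k) : bool :=
  [exists i in S, #|val A :&: val B| == nat_of_ord i].

Fixpoint adjpow (n k : nat) (S : {set 'I_k}) (m : nat) (u v : vert n k) : nat :=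
  match m with
  | 0 => nat_of_bool (u == v)
  | m'.+1 => \sum_(w : vert n k) (nat_of_bool (jadj S u w)) * adjpow S m' w v
  end.

Definition ipow_re (m : nat) : R :=
  if m %% 4 == 0 then R1 else if m %% 4 == 2 then (Ropp R1) else R0.
Definition ipow_im (m : nat) : R :=
  if m %% 4 == 1 then R1 else if m %% 4 == 3 then (Ropp R1) else R0.

(* m-th term of e^{itA} = sum_m (it)^m A^m / m!, real and imaginary parts, entry (u,v). *)
Definition Hterm_re (n k : nat) (S : {set 'I_k}) (t : R) (u v : vert n k) (m : nat) : R :=
  Rdiv (Rmult (Rmult (ipow_re m) (pow t m)) (INR (adjpow S m u v))) (INR (Factorial.fact m)).
Definition Hterm_im (n k : nat) (S : {set 'I_k}) (t : R) (u v : vert n k) (m : nat) : R :=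
  Rdiv (Rmult (Rmult (ipow_im m) (pow t m)) (INR (adjpow S m u v))) (INR (Factorial.fact m)).

(* "H_X(t)_{u,v} = x + i y": the partial sums of the exponential series converge
   to x (real part) and y (imaginary part). *)
Definition H_entry (n k : nat) (S : {set 'I_k}) (t : R) (u v : vert n k) (x y : R) : Prop :=
  Un_cv (fun N => sum_f_R0 (Hterm_re S t u v) N) x /\
  Un_cv (fun N => sum_f_R0 (Hterm_im S t u v) N) y.

Definition PST (n k : nat) (S : {set 'I_k}) (tau : R) : Prop :=
  Rlt 0 tau /\
  exists (u v : vert n k) (x y : R),
    u <> v /\ H_entry S tau u v x y /\ Rplus (Rmult x x) (Rmult y y) = R1.

Definition perm_mat (n k : nat) (sigma : vert n k -> vert n k) (u v : vert n k) : R :=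
  if v == sigma u then R1 else R0.

(* Main.v *)
Require Import Defs.
From Stdlib Require Import Reals Factorial Lra Lia.
From HB Require Import structures.
From mathcomp Require Import all_boot fingroup perm.
Set Implicit Arguments.
Unset Strict Implicit.


Lemma jadj_sym n k (S : {set 'I_k}) (u v : vert n k) : jadj S u v = jadj S v u.
Proof. by rewrite /jadj setIC. Qed.

Lemma adjpowD n k (S : {set 'I_k}) m l (u v : vert n k) :
  adjpow S (m + l) u v = \sum_w adjpow S m u w * adjpow S l w v.
Proof.
elim: m u => [|m IH] u /=.
  rewrite (bigD1 u) //= eqxx mul1n big1 ?addn0 // => w /negbTE.
  by rewrite eq_sym => ->.
rewrite (eq_bigr (fun w => \sum_z jadj S u w * (adjpow S m w z * adjpow S l z v))).
  2: by move=> w _; rewrite IH big_distrr.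
rewrite exchange_big /=; apply: eq_bigr => z _.
by rewrite big_distrl /=; apply: eq_bigr => w _; rewrite mulnA.
Qed.

Lemma adjpow1 n k (S : {set 'I_k}) (u v : vert n k) :
  adjpow S 1 u v = jadj S u v.
Proof.
rewrite /= (bigD1 v) //= eqxx muln1 big1 ?addn0 // => w /negbTE ->.
by rewrite muln0.
Qed.

Lemma adjpow_sym n k (S : {set 'I_k}) m (u v : vert n k) :
  adjpow S m u v = adjpow S m v u.
Proof.
elim: m u v => [|m IH] u v; first by rewrite /= eq_sym.
rewrite -{2}addn1 adjpowD; apply: eq_bigr => w _.
by rewrite adjpow1 jadj_sym IH mulnC.
Qed.

Lemma adjpow_le n k (S : {set 'I_k}) m (u v : vert n k) :
  adjpow S m u v <= #|{: vert n k}| ^ m.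
Proof.
elim: m u v => [|m IH] u v /=; first by case: (u == v).
rewrite expnS -[X in X * _]sum1_card big_distrl /=.
apply: leq_sum => w _; rewrite mul1n.
case: (jadj S u w) => /=; rewrite ?mul1n ?mul0n //.
Qed.

Lemma pv_card n k (p : {perm 'I_n}) (u : vert n k) : #|p @: val u| == k.
Proof. by rewrite card_imset; [exact: (valP u) | exact: perm_inj]. Qed.

Definition pv n k (p : {perm 'I_n}) (u : vert n k) : vert n k :=
  exist _ (p @: val u) (pv_card p u).

Lemma pv_inj n k (p : {perm 'I_n}) : injective (@pv n k p).
Proof.
move=> u v /(congr1 val) /= /(imset_inj (@perm_inj _ p)) H.
by apply: val_inj.
Qed.

Lemma jadj_pv n k (S : {set 'I_k}) (p : {perm 'I_n}) (u v : vert n k) :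
  jadj S (pv p u) (pv p v) = jadj S u v.
Proof.
by rewrite /jadj /= -imsetI ?card_imset //; [exact: perm_inj | move=> x y _ _; exact: perm_inj].
Qed.

Lemma adjpow_pv n k (S : {set 'I_k}) (p : {perm 'I_n}) m (u v : vert n k) :
  adjpow S m (pv p u) (pv p v) = adjpow S m u v.
Proof.
elim: m u v => [|m IH] u v /=; first by rewrite (inj_eq (@pv_inj n k p)).
rewrite (reindex_inj (@pv_inj n k p)) /=.
by apply: eq_bigr => w _; rewrite jadj_pv IH.
Qed.

Lemma mem_tp n (a c x : 'I_n) (A : {set 'I_n}) :
  (x \in tperm a c @: A) = (tperm a c x \in A).
Proof. by rewrite -{1}(tpermK a c x) mem_imset //; exact: perm_inj. Qed.

Lemma card_vert n k (u : vert n k) : #|val u| = k.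
Proof. by apply/eqP; exact: (valP u). Qed.

Lemma pv_fix n k (a c : 'I_n) (u : vert n k) :
  (a \in val u) = (c \in val u) -> pv (tperm a c) u = u.
Proof.
move=> Hac; apply: val_inj => /=; apply/setP => x.
rewrite mem_tp; case: tpermP => [->|->|] //; by rewrite Hac.
Qed.

Lemma reach n k (P : vert n k -> Prop) :
  (forall p u, P u -> P (pv p u)) -> forall u0 u, P u0 -> P u.
Proof.
move=> HP u0 u; move: {2}#|val u0 :\: val u| (leqnn #|val u0 :\: val u|) => d.
elim: d u0 => [|d IH] u0.
  rewrite leqn0 cards_eq0 setD_eq0 => Hs Pu0.
  suff -> : u = u0 by [].
  apply: val_inj; apply/eqP; rewrite eq_sym eqEcard Hs.
  by rewrite (card_vert u) (card_vert u0) leqnn.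
move=> Hd Pu0.
have [/eqP|] := boolP (val u0 :\: val u == set0).
  move=> H0; apply: (IH u0) => //; by rewrite H0 cards0.
case/set0Pn => a; rewrite inE => /andP [anu au0].
have : (val u :\: val u0 != set0).
  have E : #|val u| = #|val u0| by rewrite (card_vert u) (card_vert u0).
  rewrite -card_gt0 cardsD setIC E -cardsD card_gt0. by apply/set0Pn; exists a; rewrite inE anu au0.

case/set0Pn => c; rewrite inE => /andP [cnu0 cu].
apply: (IH (pv (tperm a c) u0)); last exact: HP.
rewrite -ltnS; apply: leq_trans Hd; apply: proper_card; apply/properP; split.
  apply/subsetP => x; rewrite !inE mem_tp => /andP [xnu].
  case: tpermP => [E|E|]; first by rewrite (negbTE cnu0).
    by rewrite E cu in xnu.
  by move=> _ _ ->; rewrite xnu.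
exists a; first by rewrite inE anu.
by rewrite !inE mem_tp tpermL (negbTE cnu0) andbF.
Qed.

From Coquelicot Require Import Coquelicot.

Local Open Scope R_scope.

Lemma Rplus_assoc' : associative Rplus.
Proof. by move=> x y z; rewrite Rplus_assoc. Qed.
HB.instance Definition _ := Monoid.isComLaw.Build R R0 Rplus Rplus_assoc' Rplus_comm Rplus_0_l.

Lemma is_series_const_sum (a : nat -> R) l :
  (forall N, sum_f_R0 a N = l) -> is_series a l.
Proof.
move=> H; apply/is_series_Reals => eps He; exists 0%nat => N _.
rewrite H /Rdist Rminus_diag Rabs_R0; lra.
Qed.

Lemma Hentry_series n k (S : {set 'I_k}) t (u v : vert n k) x y :
  H_entry S t u v x y <->
  (is_series (Hterm_re S t u v) x /\ is_series (Hterm_im S t u v) y).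
Proof. by split; case=> H1 H2; split; apply/is_series_Reals. Qed.

Lemma is_series_big (I : Type) (r : seq I) (f : I -> nat -> R) (l : I -> R) :
  (forall i, is_series (f i) (l i)) ->
  is_series (fun N => \big[Rplus/R0]_(i <- r) f i N) (\big[Rplus/R0]_(i <- r) l i).
Proof.
move=> H; elim: r => [|i r IH].
  rewrite big_nil; apply: is_series_const_sum => N.
  elim: N => [|N IHN] /=; rewrite big_nil //; rewrite IHN; lra.
rewrite big_cons; apply: (is_series_ext (fun N => plus (f i N) (\big[Rplus/R0]_(j <- r) f j N))).
  by move=> N; rewrite big_cons.
exact: is_series_plus.
Qed.

Lemma sumf_big (f : nat -> R) N :
  sum_f_R0 f N = \big[Rplus/R0]_(m < N.+1) f m.
Proof. elim: N => [|N IH]; first by rewrite big_ord1. by rewrite big_ord_recr /= IH. Qed.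

Lemma INR_big (I : finType) (a : I -> nat) :
  INR (\sum_(i : I) a i) = \big[Rplus/R0]_(i : I) INR (a i).
Proof. by apply: (big_morph INR plus_INR). Qed.

Lemma big_mulRl (I : finType) c (F : I -> R) :
  c * \big[Rplus/R0]_(i : I) F i = \big[Rplus/R0]_(i : I) (c * F i).
Proof. apply: (big_endo (fun x => c * x)); [by move=> x y; rewrite Rmult_plus_distr_l | by rewrite Rmult_0_r]. Qed.

Lemma pow_m1_mod4 l : (-1) ^ l = (-1) ^ (l %% 4).
Proof.
rewrite {1}(divn_eq l 4) -plusE pow_add mulnC -multE pow_mult.
have -> : (-1) ^ 4 = 1 by simpl; ring.
rewrite pow1; ring.
Qed.

Lemma ipow_prod m l :
  ipow_re m * ipow_re l + ipow_im m * ipow_im l = (-1) ^ l * ipow_re (m + l).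
Proof.
rewrite pow_m1_mod4 /ipow_re /ipow_im -modnDm.
case: (m %% 4)%nat (ltn_pmod m (isT : (0 < 4)%nat)) => [|[|[|[|r]]]] // _;
case: (l %% 4)%nat (ltn_pmod l (isT : (0 < 4)%nat)) => [|[|[|[|q]]]] // _; simpl; ring.
Qed.

Local Open Scope R_scope.

Lemma INR_expn a l : INR (a ^ l) = INR a ^ l.
Proof. elim: l => [|l IH] //=; by rewrite expnS mult_INR IH. Qed.

Lemma ipow_re_abs m : Rabs (ipow_re m) <= 1.
Proof.
rewrite /ipow_re; case: ifP => _; first by rewrite Rabs_R1; lra.
case: ifP => _; last by rewrite Rabs_R0; lra.
by rewrite Rabs_Ropp Rabs_R1; lra.
Qed.

Lemma ipow_im_abs m : Rabs (ipow_im m) <= 1.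
Proof.
rewrite /ipow_im; case: ifP => _; first by rewrite Rabs_R1; lra.
case: ifP => _; last by rewrite Rabs_R0; lra.
by rewrite Rabs_Ropp Rabs_R1; lra.
Qed.

Lemma term_bound (ip t : R) (A D : nat) m :
  Rabs ip <= 1 -> (A <= D ^ m)%nat ->
  Rabs (ip * t ^ m * INR A / INR (fact m)) <= (Rabs t * INR D) ^ m / INR (fact m).
Proof.
move=> Hip HA.
have hA : INR A <= INR D ^ m by rewrite -INR_expn; apply: le_INR; apply/leP.
have hf := INR_fact_lt_0 m.
rewrite /Rdiv Rabs_mult Rabs_mult Rabs_mult Rabs_inv (Rabs_pos_eq (INR (fact m))); last lra.
rewrite (Rabs_pos_eq (INR A)); last exact: pos_INR.
apply: Rmult_le_compat_r; first by left; apply: Rinv_0_lt_compat.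
rewrite Rpow_mult_distr -RPow_abs.
have h1 : 0 <= Rabs t ^ m by apply: pow_le; apply: Rabs_pos.
have h2 := pos_INR A.
have h3 := Rabs_pos ip.
have h4 : 0 <= Rabs t ^ m * INR A by apply: Rmult_le_pos.
have h5 : Rabs t ^ m * INR A <= Rabs t ^ m * INR D ^ m by apply: Rmult_le_compat_l.

nra.
Qed.

Lemma ex_re n k (S : {set 'I_k}) t (u v : vert n k) :
  ex_series (fun m => Rabs (Hterm_re S t u v m)).
Proof.
apply: (@ex_series_le _ _ _ (fun m => (Rabs t * INR #|{: vert n k}|) ^ m / INR (fact m))).
  move=> m; rewrite /norm /= /abs /= Rabs_Rabsolu.
  apply: term_bound; [exact: ipow_re_abs | exact: adjpow_le].
exists (exp (Rabs t * INR #|{: vert n k}|)).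
apply: (is_series_ext _ _ _ _ (is_exp_Reals _)) => m.
by rewrite pow_n_pow.
Qed.

Lemma ex_im n k (S : {set 'I_k}) t (u v : vert n k) :
  ex_series (fun m => Rabs (Hterm_im S t u v m)).
Proof.
apply: (@ex_series_le _ _ _ (fun m => (Rabs t * INR #|{: vert n k}|) ^ m / INR (fact m))).
  move=> m; rewrite /norm /= /abs /= Rabs_Rabsolu.
  apply: term_bound; [exact: ipow_im_abs | exact: adjpow_le].
exists (exp (Rabs t * INR #|{: vert n k}|)).
apply: (is_series_ext _ _ _ _ (is_exp_Reals _)) => m.
by rewrite pow_n_pow.
Qed.

Local Open Scope R_scope.

Lemma term_eq n k (S : {set 'I_k}) t (u w : vert n k) m l :
  Hterm_re S t u w m * Hterm_re S t u w l + Hterm_im S t u w m * Hterm_im S t u w l =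
  (-1) ^ l * ipow_re (m + l) * t ^ (m + l) / (INR (fact m) * INR (fact l)) *
  INR (adjpow S m u w * adjpow S l w u).
Proof.
rewrite -ipow_prod mult_INR (adjpow_sym S l w u) -plusE pow_add /Hterm_re /Hterm_im.
have := INR_fact_neq_0 m; have := INR_fact_neq_0 l => h1 h2.
field; split => //.
Qed.

Lemma coef n k (S : {set 'I_k}) t (u : vert n k) N :
  \big[Rplus/R0]_(w : vert n k)
    (sum_f_R0 (fun m => Hterm_re S t u w m * Hterm_re S t u w (N - m)) N +
     sum_f_R0 (fun m => Hterm_im S t u w m * Hterm_im S t u w (N - m)) N)
  = if N is 0%nat then 1 else 0.
Proof.
set K := fun m : nat => (-1) ^ (N - m) * ipow_re N * t ^ N /
   (INR (fact m) * INR (fact (N - m))).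
transitivity (\big[Rplus/R0]_(m < N.+1) (K m * INR (adjpow S N u u))).
  rewrite (eq_bigr (fun w => \big[Rplus/R0]_(m < N.+1)
        (K m * INR (adjpow S m u w * adjpow S (N - m) w u)))); last first.
    move=> w _; rewrite -plus_sum sumf_big; apply: eq_bigr => m _.
    rewrite term_eq subnKC //; exact: (ltn_ord m).
  rewrite exchange_big /=; apply: eq_bigr => m _.
  rewrite -big_mulRl -INR_big -adjpowD subnKC //; exact: (ltn_ord m).
rewrite -(sumf_big (fun m => K m * INR (adjpow S N u u))).
transitivity (ipow_re N * t ^ N * INR (adjpow S N u u) / INR (fact N) * (1 + -1) ^ N).
  rewrite Binomial.binomial scal_sum; apply: PartSum.sum_eq => i Hi.
  rewrite /K /Binomial.C pow1.
  have := INR_fact_neq_0 i; have := INR_fact_neq_0 (N - i); have := INR_fact_neq_0 N.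
  move=> h1 h2 h3; rewrite ?minusE.
set X := INR (adjpow S N u u). set a := INR (fact N). set b := INR (fact i). set c := INR (fact (N - i)). set d := (-1) ^ (N - i).
field; auto.
clear K; case: N => [|N].
  by rewrite /= /ipow_re /= eqxx /=; field.
have -> : (1 + -1) = 0 by ring.
rewrite pow_i; [ring | lia].
Qed.

Lemma row_norm n k (S : {set 'I_k}) t (u : vert n k) :
  \big[Rplus/R0]_(w : vert n k)
    (Series (Hterm_re S t u w) * Series (Hterm_re S t u w) +
     Series (Hterm_im S t u w) * Series (Hterm_im S t u w)) = 1.
Proof.
set f := fun w N => sum_f_R0 (fun m => Hterm_re S t u w m * Hterm_re S t u w (N - m)) N +
     sum_f_R0 (fun m => Hterm_im S t u w m * Hterm_im S t u w (N - m)) N.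
have H : is_series (fun N => \big[Rplus/R0]_(w <- index_enum (vert n k)) f w N)
   (\big[Rplus/R0]_(w <- index_enum (vert n k))
    (Series (Hterm_re S t u w) * Series (Hterm_re S t u w) +
     Series (Hterm_im S t u w) * Series (Hterm_im S t u w))).
  apply: is_series_big => w; rewrite /f.
  apply: (is_series_plus (fun N => sum_f_R0 (fun m => Hterm_re S t u w m * Hterm_re S t u w (N - m)) N)).
    apply: is_series_mult; try exact: ex_re;
      apply: Series_correct; apply: ex_series_Rabs; exact: ex_re.
  apply: is_series_mult; try exact: ex_im;
    apply: Series_correct; apply: ex_series_Rabs; exact: ex_im.
have H1 : is_series (fun N => \big[Rplus/R0]_(w <- index_enum (vert n k)) f w N) 1.
  apply: is_series_const_sum => N.
  rewrite (PartSum.sum_eq _ (fun N => if N is 0%nat then 1 else 0)); last first.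
    by move=> i _; rewrite -(coef S t u i).
  by elim: N => [|N IH] //=; rewrite IH Rplus_0_r.
by rewrite -(is_series_unique _ _ H) (is_series_unique _ _ H1).
Qed.

Local Open Scope R_scope.

Lemma Hentry_iff n k (S : {set 'I_k}) t (u v : vert n k) x y :
  H_entry S t u v x y <->
  (x = Series (Hterm_re S t u v) /\ y = Series (Hterm_im S t u v)).
Proof.
rewrite Hentry_series; split.
  by case=> H1 H2; rewrite (is_series_unique _ _ H1) (is_series_unique _ _ H2).
case=> -> ->; split; apply: Series_correct; apply: ex_series_Rabs;
  [exact: ex_re | exact: ex_im].
Qed.

Lemma Series_pv n k (S : {set 'I_k}) t (p : {perm 'I_n}) (u v : vert n k) :
  Series (Hterm_re S t (pv p u) (pv p v)) = Series (Hterm_re S t u v) /\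
  Series (Hterm_im S t (pv p u) (pv p v)) = Series (Hterm_im S t u v).
Proof.
by split; apply: Series_ext => m; rewrite /Hterm_re /Hterm_im adjpow_pv.
Qed.

Lemma zero_others n k (S : {set 'I_k}) t (u v0 : vert n k) :
  Series (Hterm_re S t u v0) * Series (Hterm_re S t u v0) +
  Series (Hterm_im S t u v0) * Series (Hterm_im S t u v0) = 1 ->
  forall w, w <> v0 ->
  Series (Hterm_re S t u w) = 0 /\ Series (Hterm_im S t u w) = 0.
Proof.
move=> H1 w Hw.
set F := fun w => Series (Hterm_re S t u w) * Series (Hterm_re S t u w) +
  Series (Hterm_im S t u w) * Series (Hterm_im S t u w).
have HN := row_norm S t u; rewrite -/F in HN.
have Fp : forall z, 0 <= F z by move=> z; rewrite /F; nra.
rewrite (bigD1 v0) //= -/F in HN.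
rewrite (bigD1 w) /= in HN; last by apply/eqP.
move: HN; set rest := \big[Rplus/R0]_(i | _) _ => HN.
have Hr : 0 <= rest by rewrite /rest; apply: big_ind => //; [lra | move=> a b; lra | move=> *; apply: Fp].
change (F v0 + (F w + rest) = 1) in HN.
have HF0 : F v0 = 1 by exact: H1.
have Fw : F w = 0 by have := Fp w; lra.
rewrite /F in Fw; split; nra.
Qed.

Definition compl n k (H : n = (2 * k)%nat) (u : vert n k) : vert n k.
Proof.
exists (~: val u); apply/eqP.
by rewrite cardsCs setCK card_ord (card_vert u) H mul2n -addnn addnK.
Defined.


Lemma pv_compl n k (H : n = (2 * k)%nat) (p : {perm 'I_n}) (u : vert n k) :
  pv p (compl H u) = compl H (pv p u).
Proof.
apply: val_inj => /=; apply/setP => z; rewrite inE.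
rewrite -{1}(permKV p z) mem_imset ?inE; last exact: perm_inj.
by rewrite -{2}(permKV p z) mem_imset //; exact: perm_inj.
Qed.

Lemma vert_elem n k (u : vert n k) : (1 <= k)%nat -> exists a, a \in val u.
Proof.
move=> hk; have : (0 < #|val u|)%nat by rewrite (card_vert u).
by rewrite card_gt0 => /set0Pn.
Qed.

Theorem mainTheorem19 (n k : nat) (S : {set 'I_k}) (tau : R) :
  (1 <= k)%N -> (2 * k <= n)%N -> (1 < #|S|)%N ->
  PST n S tau ->
  n = (2 * k)%N /\
  exists (sigma : vert n k -> vert n k) (a b : R),
    (forall u, sigma (sigma u) = u) /\
    (forall u, sigma u <> u) /\
    Rplus (Rmult a a) (Rmult b b) = R1 /\
    (forall u v : vert n k,
        H_entry S tau u v (Rmult a (perm_mat sigma u v)) (Rmult b (perm_mat sigma u v))).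
Proof.
move=> hk h2k hS [tpos [u0 [v0 [x [y [Huv [Hent Hxy]]]]]]].
move/Hentry_iff: Hent => [Ex Ey].
have Hxy' := Hxy; rewrite Ex Ey in Hxy'.
have key : forall p, pv p u0 = u0 -> pv p v0 = v0.
  move=> p Hp; case: (eqVneq (pv p v0) v0) => // /eqP Hne.
  have [Z1 Z2] := zero_others Hxy' Hne.
  have [E1 E2] := Series_pv S tau p u0 v0; rewrite Hp in E1 E2.
  rewrite E1 in Z1; rewrite E2 in Z2.
  by exfalso; rewrite -Ex -Ey in Z1 Z2; rewrite Z1 Z2 in Hxy; lra.
have disj : forall a, a \in val u0 -> a \notin val v0.
  move=> a au0; apply/negP => av0.
  have [sub|] := boolP (val u0 \subset val v0).
    apply: Huv; apply: val_inj; apply/eqP; rewrite eqEcard sub.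
    by rewrite (card_vert u0) (card_vert v0) leqnn.
  case/subsetPn => c cu0 cnv0.
  have Hf : pv (tperm a c) u0 = u0 by apply: pv_fix; rewrite au0 cu0.
  have := key (tperm a c) Hf.
  move=> Ek; move: (f_equal (fun w : vert n k => c \in val w) Ek); rewrite /= mem_tp tpermR av0.
  by rewrite (negbTE cnv0).
have Hv0 : val v0 = ~: val u0.
  apply/setP => d; rewrite inE.
  case du0: (d \in val u0); first by apply/negbTE; apply: disj.
  have [b bv0] := vert_elem v0 hk.
  have bu0 : (b \in val u0) = false.
    by apply/negP => bu0; move: (disj _ bu0); rewrite bv0.
  have Hf : pv (tperm b d) u0 = u0 by apply: pv_fix; rewrite bu0 du0.
  have := key (tperm b d) Hf.
  move=> Ek; move: (f_equal (fun w : vert n k => d \in val w) Ek); rewrite /= mem_tp tpermR bv0.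
  by move=> <-.
have Hn : n = (2 * k)%nat.
  by rewrite -{1}(card_ord n) -(cardsC (val u0)) -Hv0 (card_vert u0) (card_vert v0) mul2n addnn.
split => //.
exists (compl Hn), x, y.
split; first by move=> u; apply: val_inj => /=; rewrite setCK.
split.
  move=> u /(congr1 val) /= E.
  have [a au] := vert_elem u hk.
  have : a \in ~: val u by rewrite E; exact: au.
  by rewrite inE au.
split => //.
set P := fun u => Series (Hterm_re S tau u (compl Hn u)) = x /\
                  Series (Hterm_im S tau u (compl Hn u)) = y.
have HP : forall u, P u.
  move=> u; apply: (@reach n k P _ u0 u).
    move=> p w [E1 E2]; rewrite /P -pv_compl.
    by have [-> ->] := Series_pv S tau p w (compl Hn w).
  rewrite /P; have -> : compl Hn u0 = v0 by apply: val_inj => /=; rewrite Hv0.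
  by split.
move=> u v; rewrite /perm_mat; case: eqP => [->|Hne].
  by apply/Hentry_iff; rewrite !Rmult_1_r; have [-> ->] := HP u.
rewrite !Rmult_0_r; apply/Hentry_iff.
have [E1 E2] := HP u.
have Hn1 : (Series (Hterm_re S tau u (compl Hn u)) * Series (Hterm_re S tau u (compl Hn u)) +
  Series (Hterm_im S tau u (compl Hn u)) * Series (Hterm_im S tau u (compl Hn u)) = 1).
  by rewrite E1 E2.
by have [-> ->] := zero_others Hn1 Hne.
Qed.
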